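(* In a monotonous quiver, a phylogenetic vertex $X$ has exactly $h(X)$ isotypy classes of critical ancestors.
   Context: A quiver consists of a class of vertices and, for each ordered pair of vertices $(A,B)$, a set of edges $A\to B$ (loops and multiple edges allowed). An evolution of length $m\ge 0$ is a sequence $A_0\leftarrow A_1\leftarrow\cdots\leftarrow A_m$ of vertices together with edges $A_k\to A_{k-1}$ ($1\le k\le m$); $A_0$ is its initial and $A_m$ its terminal vertex. Write $A\le B$ ($A$ is an ancestor of $B$) if there is an evolution with initial vertex $A$ and terminal vertex $B$; $A,B$ are isotypic ($A\sim B$) if $A\le B$ and $B\le A$. A vertex $A$ is primitive if every ancestor of $A$ is isotypic to $A$. A full evolution for $X$ is an evolution with primitive initial vertex and terminal vertex $X$. The height $h(X)$ is the smallest length of a full evolution for $X$ ($\infty$ if none). A vertex $A_k$ ($0\le k<m$) of an evolution $A_0\leftarrow\cdots\leftarrow A_m$ is critical if $h(A_k)<\infty$ and $h(A_{k+1})=h(A_k)+1$. The critical ancestors of a vertex $B$ are the critical vertices of full evolutions terminating at $B$. An evolution $\alpha=(A_0\leftarrow\cdots\leftarrow A_m)$ embeds in $\beta=(B_0\leftarrow\cdots\leftarrow B_n)$ if $m\le n$ and there are $0\le r_0<\cdots<r_m\le n$ with $A_k\sim B_{r_k}$. A universal evolution for $X$ is a full evolution for $X$ embedding in every full evolution for $X$; $X$ is phylogenetic if one exists. A quiver is monotonous if $h(A)\ge h(B)$ for every edge $A\to B$. *)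

(* Defs.v *)
From Stdlib Require Import Arith List.
Import ListNotations.
Set Implicit Arguments.

Section Quiver.
Variable V : Type.
Variable E : V -> V -> Type.

(* The vertex list [A_0; A_1; ...; A_m] carries edges A_k -> A_(k-1). *)
Fixpoint chain (l : list V) : Prop :=
  match l with
  | a :: ((b :: _) as t) => inhabited (E b a) /\ chain t
  | _ => True
  end.

(* An evolution is a nonempty chain; we represent it as a list A_0 :: rest,
   its length is [length rest], initial vertex A_0, terminal [last (A_0::rest) A_0]. *)
Definition evolution (l : list V) : Prop := l <> [] /\ chain l.

Definition initial (l : list V) (A : V) : Prop := hd_error l = Some A.
Definition terminal (l : list V) (B : V) : Prop :=
  exists A, hd_error l = Some A /\ last l A = B.
Definition evlength (l : list V) : nat := pred (length l).

Definition ancestor (A B : V) : Prop :=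
  exists l, evolution l /\ initial l A /\ terminal l B.

Definition isotypic (A B : V) : Prop := ancestor A B /\ ancestor B A.

Definition primitive (A : V) : Prop := forall B, ancestor B A -> isotypic B A.

Definition full_evolution (X : V) (l : list V) : Prop :=
  evolution l /\ (exists A, initial l A /\ primitive A) /\ terminal l X.

(* h(X) = n  (h(X) = infinity iff no n satisfies this) *)
Definition height_is (X : V) (n : nat) : Prop :=
  (exists l, full_evolution X l /\ evlength l = n) /\
  (forall l, full_evolution X l -> n <= evlength l).

Definition critical_in (l : list V) (A : V) : Prop :=
  exists k B n, nth_error l k = Some A /\ nth_error l (S k) = Some B /\
                height_is A n /\ height_is B (S n).

Definition critical_ancestor (B A : V) : Prop :=
  exists l, full_evolution B l /\ critical_in l A.

Definition embeds (alpha beta : list V) : Prop :=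
  evlength alpha <= evlength beta /\
  exists r : nat -> nat,
    (forall k, S k < length alpha -> r k < r (S k)) /\
    (forall k A, nth_error alpha k = Some A ->
       exists B, nth_error beta (r k) = Some B /\ isotypic A B).

Definition universal_evolution (X : V) (l : list V) : Prop :=
  full_evolution X l /\ forall l', full_evolution X l' -> embeds l l'.

Definition phylogenetic (X : V) : Prop := exists l, universal_evolution X l.

(* h(A) >= h(B) for every edge A -> B (with the convention infinity >= everything) *)
Definition monotonous : Prop :=
  forall A B, inhabited (E A B) ->
    forall n, height_is A n -> exists m, height_is B m /\ m <= n.

End Quiver.

(* Main.v *)
Require Import Defs.
From Stdlib Require Import Arith List Lia.
Import ListNotations.
Local Set Implicit Arguments.

Section Proofs.
Variable V : Type.
Variable E : V -> V -> Type.

Lemma chain_tl (x : V) l : chain E (x :: l) -> chain E l.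
Proof. destruct l; simpl; tauto. Qed.

Lemma chain_skipn k : forall l, chain E l -> chain E (skipn k l).
Proof.
  induction k; intros l H; simpl; auto.
  destruct l; simpl; auto. apply IHk. eapply chain_tl; eauto.
Qed.

Lemma chain_firstn : forall l k, chain E l -> chain E (firstn k l).
Proof.
  induction l as [|x t IH]; intros k H; destruct k; simpl; auto.
  destruct t as [|y t']; simpl; auto.
  - destruct k; simpl; auto.
  - destruct H as [H1 H2]. destruct k; simpl; auto.
    split; auto. specialize (IH (S k) H2). simpl in IH. exact IH.
Qed.

Lemma last_default (x : V) l d d' : last (x :: l) d = last (x :: l) d'.
Proof.
  revert x; induction l; intros; simpl; auto.
  destruct l; simpl in *; auto.
Qed.

Lemma last_firstn : forall (l : list V) m b d,
  nth_error l m = Some b -> last (firstn (S m) l) d = b.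
Proof.
  induction l as [|x t IH]; intros m b d H; destruct m; simpl in *; try discriminate.
  - inversion H; subst. destruct t; reflexivity.
  - destruct t as [|y t']; [destruct m; discriminate|].
    specialize (IH m b d H). simpl in IH. destruct m; simpl in *; auto.
Qed.

Lemma nth_error_last : forall (l : list V) d, l <> [] ->
  nth_error l (pred (length l)) = Some (last l d).
Proof.
  induction l as [|x t IH]; intros d H; [congruence|].
  destruct t as [|y t']; simpl; auto.
  specialize (IH d ltac:(discriminate)). simpl in IH. exact IH.
Qed.

Lemma last_skipn : forall k (l : list V) c d,
  nth_error l k = Some c -> last (skipn k l) d = last l d.
Proof.
  induction k; intros l c d H; simpl; auto.
  destruct l as [|x t]; simpl in *; try discriminate.
  rewrite (IHk t c d H). destruct t; simpl in *; auto. destruct k; discriminate.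
Qed.

Lemma chain_join : forall (s1 : list V) t d b, chain E s1 -> s1 <> [] ->
  last s1 d = b -> chain E (b :: t) -> chain E (s1 ++ t).
Proof.
  induction s1 as [|x s IH]; intros t d b H1 H2 H3 H4; [congruence|].
  destruct s as [|y s']; simpl in *.
  - subst. exact H4.
  - destruct H1 as [Hxy Hc]. split; auto.
    specialize (IH t d b Hc ltac:(discriminate) H3 H4). exact IH.
Qed.

Lemma last_app_ne : forall (s1 t : list V) d, s1 <> [] ->
  last (s1 ++ t) d = last (last s1 d :: t) d.
Proof.
  induction s1 as [|x s IH]; intros t d H; [congruence|].
  destruct s as [|y s'].
  - reflexivity.
  - change (last ((x :: y :: s') ++ t) d) with (last ((y :: s') ++ t) d).
    change (last (x :: y :: s') d) with (last (y :: s') d).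
    apply IH. discriminate.
Qed.

Lemma seg : forall l i p a b, chain E l -> i <= p -> nth_error l i = Some a ->
  nth_error l p = Some b ->
  exists s, evolution E s /\ initial s a /\ terminal s b /\ evlength s = p - i.
Proof.
  intros l i p a b Hc Hip Ha Hb.
  assert (H0 : nth_error (skipn i l) (p - i) = Some b).
  { rewrite nth_error_skipn. replace (i + (p - i)) with p by lia. exact Hb. }
  assert (Hh : hd_error (skipn i l) = Some a) by (rewrite hd_error_skipn; exact Ha).
  assert (Hcs := chain_skipn i l Hc).
  destruct (skipn i l) as [|a0 rest] eqn:Es; [discriminate|].
  simpl in Hh. inversion Hh; subst a0.
  exists (firstn (S (p - i)) (a :: rest)).
  assert (Hlen : p - i < length (a :: rest)).
  { apply nth_error_Some. rewrite H0. discriminate. }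
  repeat split.
  - simpl. discriminate.
  - apply chain_firstn. exact Hcs.
  - exists a. split; [reflexivity|]. apply last_firstn. exact H0.
  - unfold evlength. rewrite length_firstn. lia.
Qed.

Lemma join : forall s1 b t, evolution E s1 -> terminal s1 b -> chain E (b :: t) ->
  evolution E (s1 ++ t) /\ hd_error (s1 ++ t) = hd_error s1 /\
  terminal (s1 ++ t) (last (b :: t) b) /\ evlength (s1 ++ t) = evlength s1 + length t.
Proof.
  intros s1 b t [Hne Hc] [A [HA HL]] Hbt.
  destruct s1 as [|x s]; [congruence|].
  repeat split.
  - simpl. discriminate.
  - eapply chain_join; eauto.
  - exists x. split; [reflexivity|].
    rewrite last_app_ne by discriminate. simpl in HA. inversion HA; subst A.
    rewrite HL. apply last_default.
  - unfold evlength. rewrite length_app. simpl. lia.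
Qed.


Lemma h_uniq a n m : height_is E a n -> height_is E a m -> n = m.
Proof.
  intros [[l1 [F1 L1]] H1] [[l2 [F2 L2]] H2].
  specialize (H1 _ F2). specialize (H2 _ F1). lia.
Qed.

Lemma anc_height_chain (Hm : monotonous E) : forall l a, chain E (a :: l) ->
  forall m, height_is E (last (a :: l) a) m -> exists k, height_is E a k /\ k <= m.
Proof.
  induction l as [|b t IH]; intros a Hc m Hh.
  - exists m. simpl in Hh. auto.
  - destruct Hc as [Hba Hc].
    change (last (a :: b :: t) a) with (last (b :: t) a) in Hh.
    rewrite (last_default b t a b) in Hh.
    destruct (IH b Hc m Hh) as [k' [Hk' Hle]].
    destruct (Hm b a Hba k' Hk') as [k [Hk Hle2]].
    exists k. split; auto. lia.
Qed.

Lemma ancestor_height (Hm : monotonous E) A B m : ancestor E A B ->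
  height_is E B m -> exists k, height_is E A k /\ k <= m.
Proof.
  intros [l [[Hne Hc] [Hi [A' [HA' HL]]]]] Hh.
  destruct l as [|x t]; [congruence|].
  unfold initial in Hi. simpl in Hi, HA'. inversion Hi; inversion HA'; subst.
  eapply anc_height_chain; eauto.
Qed.

Lemma iso_height (Hm : monotonous E) A B m : isotypic E A B ->
  height_is E B m -> height_is E A m.
Proof.
  intros [HAB HBA] Hb.
  destruct (ancestor_height Hm HAB Hb) as [k [Hk Hle]].
  destruct (ancestor_height Hm HBA Hk) as [m' [Hm' Hle2]].
  pose proof (h_uniq Hb Hm'). replace m with k by lia. exact Hk.
Qed.

Lemma exact_heights (Hm : monotonous E) X l n : full_evolution E X l ->
  evlength l = n -> height_is E X n ->
  forall i a, nth_error l i = Some a -> height_is E a i.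
Proof.
  intros [[Hne Hc] [[A0 [HA0 HP]] [A' [HA' HL]]]] Hlen HX i a Ha.
  assert (HXn : nth_error l n = Some X).
  { rewrite <- Hlen, <- HL. apply nth_error_last. exact Hne. }
  assert (Hin : i < length l) by (apply nth_error_Some; rewrite Ha; discriminate).
  unfold evlength in Hlen.
  assert (Hi : i <= n) by lia.
  destruct (@seg l i n a X Hc Hi Ha HXn) as [s [Hs [Hsi [Hst Hsl]]]].
  destruct (ancestor_height Hm (A:=a) (B:=X) (ex_intro _ s (conj Hs (conj Hsi Hst))) HX)
    as [k [Hk Hkn]].
  destruct (@seg l 0 i A0 a Hc (Nat.le_0_l i) HA0 Ha) as [s0 [Hs0 [Hs0i [Hs0t Hs0l]]]].
  assert (Hki : k <= i).
  { destruct Hk as [_ Hk]. specialize (Hk s0). rewrite Hs0l, Nat.sub_0_r in Hk. apply Hk.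
    split; [exact Hs0|]. split; [|exact Hs0t]. exists A0. split; auto. }
  pose proof Hk as Hk'.
  destruct Hk' as [[mm [[Hmm [[A1 [HA1 HP1]] Hmt]] Hml]] _].
  destruct s as [|a0 t]; [destruct Hs; congruence|].
  unfold initial in Hsi; simpl in Hsi; inversion Hsi; subst a0.
  destruct (@join mm a t Hmm Hmt (proj2 Hs)) as [J1 [J2 [J3 J4]]].
  assert (Hlast : last (a :: t) a = X).
  { destruct Hst as [a1 [H1 H2]]. simpl in H1. inversion H1; subst. exact H2. }
  rewrite Hlast in J3.
  assert (n <= k + length t).
  { destruct HX as [_ HX]. rewrite <- Hml, <- J4. apply HX.
    split; [exact J1|]. split; [|exact J3]. exists A1. split; auto.
    unfold initial. rewrite J2. exact HA1. }
  unfold evlength in Hsl. simpl in Hsl.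
  replace i with k by lia. exact Hk.
Qed.




Lemma skipn_nth : forall k (l : list V) c, nth_error l k = Some c ->
  skipn k l = c :: skipn (S k) l.
Proof.
  induction k; intros l c H; destruct l as [|x t]; simpl in *; try discriminate.
  - inversion H; reflexivity.
  - apply IHk; exact H.
Qed.

End Proofs.
Unset Implicit Arguments.


Theorem corollary6p3 (V : Type) (E : V -> V -> Type) :
  monotonous E ->
  forall X : V, phylogenetic E X ->
  forall n : nat, height_is E X n ->
  exists cs : list V,
    length cs = n /\
    (forall c, In c cs -> critical_ancestor E X c) /\
    (forall i j a b, i <> j -> nth_error cs i = Some a -> nth_error cs j = Some b ->
        ~ isotypic E a b) /\
    (forall c, critical_ancestor E X c -> exists c', In c' cs /\ isotypic E c c').
Proof.
  intros Hm X [U [HU Huniv]] n HX.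
  assert (HevU : evlength U = n).
  { pose proof HX as [[l0 [Fl0 Ll0]] Hmin].
    specialize (Hmin U HU). destruct (Huniv l0 Fl0) as [Hle _]. lia. }
  assert (HlenU : length U = S n).
  { destruct HU as [[HneU _] _]. unfold evlength in HevU.
    destruct U; [congruence|]. simpl in *. lia. }
  pose proof (exact_heights Hm HU HevU HX) as Hex.
  exists (firstn n U).
  split; [rewrite length_firstn; lia|].
  split.
  { intros c Hin. apply In_nth_error in Hin. destruct Hin as [i Hi].
    rewrite nth_error_firstn in Hi.
    destruct (Nat.ltb_spec i n) as [Hlt|]; [|discriminate].
    destruct (nth_error U (S i)) as [B|] eqn:HB.
    2:{ apply nth_error_None in HB. lia. }
    exists U. split; [exact HU|]. exists i, B, i. split; [exact Hi|]. split; [exact HB|]. split; apply Hex; assumption. }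
  split.
  { intros i j a b Hij Ha Hb Hab.
    rewrite nth_error_firstn in Ha, Hb.
    destruct (Nat.ltb_spec i n); [|discriminate].
    destruct (Nat.ltb_spec j n); [|discriminate].
    pose proof (Hex _ _ Ha) as H1. pose proof (Hex _ _ Hb) as H2.
    pose proof (iso_height Hm Hab H2) as H3.
    apply Hij. exact (h_uniq H1 H3). }
  intros c [l' [Hl' [k [B [j [Hc [HB [Hcj HBj]]]]]]]].
  pose proof Hl' as [[Hne' Hch'] [[A0 [HA0 HP0]] [A' [HA' HL']]]].
  assert (HXl : nth_error l' (pred (length l')) = Some X).
  { rewrite <- HL'. apply nth_error_last. exact Hne'. }
  assert (HkB : S k < length l') by (apply nth_error_Some; rewrite HB; discriminate).
  assert (Hjn : j < n).
  { destruct (@seg V E l' (S k) (pred (length l')) B X Hch' ltac:(lia) HB HXl)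
      as [s [Hs [Hsi [Hst _]]]].
    destruct (ancestor_height Hm (A:=B) (B:=X) (ex_intro _ s (conj Hs (conj Hsi Hst))) HX)
      as [kk [Hkk Hle]].
    pose proof (h_uniq Hkk HBj). lia. }
  pose proof Hcj as [[M [HM HMl]] _].
  pose proof (exact_heights Hm HM HMl Hcj) as HexM.
  set (t := skipn (S k) l').
  assert (Hct : chain E (c :: t)).
  { unfold t. rewrite <- (skipn_nth k l' Hc). apply chain_skipn. exact Hch'. }
  destruct HM as [HMe [[A1 [HA1 HP1]] HMt]].
  destruct (@join V E M c t HMe HMt Hct) as [J1 [J2 [J3 J4]]].
  assert (Hlast : last (c :: t) c = X).
  { unfold t. rewrite <- (skipn_nth k l' Hc). rewrite (last_skipn k l' c Hc).
    rewrite <- HL'. destruct l'; [congruence|]. apply last_default. }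
  rewrite Hlast in J3.
  assert (Hfull : full_evolution E X (M ++ t)).
  { split; [exact J1|]. split; [|exact J3]. exists A1. split; auto.
    unfold initial. rewrite J2. exact HA1. }
  destruct (Huniv _ Hfull) as [_ [r [Hr Hiso]]].
  destruct (nth_error U j) as [u|] eqn:Hu.
  2:{ apply nth_error_None in Hu. lia. }
  destruct (Hiso j u Hu) as [w [Hw Huw]].
  assert (Hwu : isotypic E w u) by (destruct Huw; split; auto).
  pose proof (iso_height Hm Hwu (Hex _ _ Hu)) as Hwj.
  assert (HMc : nth_error M j = Some c).
  { destruct HMt as [a1 [H1 H2]]. rewrite <- H2, <- HMl. apply nth_error_last.
    destruct HMe; auto. }
  assert (Hwc : w = c).
  { destruct (Nat.lt_ge_cases (r j) (length M)) as [Hlt|Hge].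
    - rewrite nth_error_app1 in Hw by exact Hlt.
      pose proof (HexM _ _ Hw) as H1. pose proof (h_uniq Hwj H1) as H2.
      rewrite <- H2 in Hw. congruence.
    - rewrite nth_error_app2 in Hw by exact Hge. unfold t in Hw.
      rewrite nth_error_skipn in Hw.
      destruct (@seg V E l' (S k) (S k + (r j - length M)) B w Hch' ltac:(lia) HB Hw)
        as [s [Hs [Hsi [Hst _]]]].
      destruct (ancestor_height Hm (A:=B) (B:=w) (ex_intro _ s (conj Hs (conj Hsi Hst))) Hwj)
        as [kk [Hkk Hle]].
      pose proof (h_uniq Hkk HBj). lia. }
  subst w.
  exists u. split.
  - apply (nth_error_In _ j). rewrite nth_error_firstn.
    destruct (Nat.ltb_spec j n); [exact Hu|lia].
  - exact Hwu.
Qed.
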